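(* Let $\Theta$ be a causal theory over $\mathfrak L$. The map $\Sigma\mapsto\Sigma\cap\mathfrak L$ is a bijection from the set of maximal $\vdash_\Box$-consistent subsets $\Sigma$ of $\mathcal L_\Box$ onto the set of maximal classically consistent subsets of $\mathfrak L$ (i.e. onto $\mathfrak M$).
   Context: $\mathfrak L$ is a classical propositional language; $\mathfrak M$ is the set of its models, identified with the maximal classically consistent subsets of $\mathfrak L$. A causal rule is $\phi\triangleright\psi$ with $\phi,\psi\in\mathfrak L$; a causal theory $\Theta$ is a set of causal rules. $\mathcal L_\Box$ is generated by $\mathfrak L$ and a unary $\Box$. A set $\Sigma\subseteq\mathcal L_\Box$ is $\vdash_\Box$-consistent if the sequent $\Sigma\vdash_\Box$ (empty right side) is not derivable in $\mathbf S_\Theta$, and maximal if it has no proper $\vdash_\Box$-consistent superset. The sequent calculus $\mathbf S_\Theta$ derives sequents $\Gamma\vdash_\Box\Delta$ (collections possibly infinite; derivations well-founded, possibly infinitely branching) via: axiom $p\vdash_\Box p$; $\perp\vdash_\Box$; $\vdash_\Box\top$; weakening and contraction; classical two-sided LK rules for $\neg,\wedge,\vee,\to$ with shared contexts; $\Box$R: if $\phi_1\triangleright\psi_1,\dots,\phi_k\triangleright\psi_k\in\Theta$ and $\psi_1,\dots,\psi_k\vdash_\Box p$ is derivable, from $\Gamma\vdash_\Box\phi_1\wedge\dots\wedge\phi_k,\Delta$ infer $\Gamma\vdash_\Box\Box p,\Delta$; $\Box$L: letting $\{S_j\}_{j\in J}$ be all finite $S_j\subseteq\Theta$ with $\{\psi:\phi\triangleright\psi\in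 S_j\}\vdash_\Box p$ derivable, from $\Gamma,\{\phi:\phi\triangleright\psi\in S_j\}\vdash_\Box\Delta$ for all $j\in J$ infer $\Gamma,\Box p\vdash_\Box\Delta$; multicut: from $\Gamma\vdash_\Box p^m,\Delta$ and $\Gamma',p^n\vdash_\Box\Delta'$ ($m,n>0$) infer $\Gamma,\Gamma'\vdash_\Box\Delta,\Delta'$. *)

(* Defs.v *)
From Stdlib Require Import List.
Import ListNotations.

Set Implicit Arguments.

Inductive form (At : Type) : Type :=
| Var : At -> form At
| Bot : form At
| Top : form At
| Neg : form At -> form At
| And : form At -> form At -> form At
| Or  : form At -> form At -> form At
| Imp : form At -> form At -> form At.
Arguments Bot {At}. Arguments Top {At}.

Inductive mform (At : Type) : Type :=
| MVar : At -> mform At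
| MBot : mform At
| MTop : mform At
| MNeg : mform At -> mform At
| MAnd : mform At -> mform At -> mform At
| MOr  : mform At -> mform At -> mform At
| MImp : mform At -> mform At -> mform At
| MBox : mform At -> mform At.
Arguments MBot {At}. Arguments MTop {At}.

Fixpoint emb {At : Type} (f : form At) : mform At :=
  match f with
  | Var a => MVar a
  | Bot => MBot
  | Top => MTop
  | Neg a => MNeg (emb a)
  | And a b => MAnd (emb a) (emb b)
  | Or a b => MOr (emb a) (emb b)
  | Imp a b => MImp (emb a) (emb b)
  end.

(* A causal rule phi ▷ psi is the pair (phi, psi); a causal theory is a set of rules. *)
Definition causal_rule (At : Type) : Type := (form At * form At)%type.
Definition causal_theory (At : Type) : Type := causal_rule At -> Prop.

Definition sempty {T : Type} : T -> Prop := fun _ => False.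
Definition ssing {T : Type} (x : T) : T -> Prop := fun y => y = x.
Definition sunion {T : Type} (X Y : T -> Prop) : T -> Prop := fun y => X y \/ Y y.
Definition ssub {T : Type} (X Y : T -> Prop) : Prop := forall y, X y -> Y y.
Definition slist {T : Type} (l : list T) : T -> Prop := fun y => In y l.
Definition sadd {T : Type} (X : T -> Prop) (x : T) : T -> Prop := sunion X (ssing x).

Fixpoint bigconj {At : Type} (l : list (form At)) : form At :=
  match l with
  | [] => Top
  | [x] => x
  | x :: xs => And x (bigconj xs)
  end.

Definition in_theory {At : Type} (Th : causal_theory At) (S : list (causal_rule At)) : Prop :=
  forall r, In r S -> Th r.

(* The calculus S_Theta, parametrised by the relation E that interprets the
   side conditions "psi_1, ..., psi_k |-_Box p" of the Box rules.  S_Theta itself is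
   obtained when E is derivability in the calculus itself (see [is_S_Theta]). *)
Inductive derivS {At : Type} (Th : causal_theory At)
  (E : list (form At) -> mform At -> Prop) :
  (mform At -> Prop) -> (mform At -> Prop) -> Prop :=
| dS_ax : forall p, derivS Th E (ssing p) (ssing p)
| dS_bot : derivS Th E (ssing MBot) sempty
| dS_top : derivS Th E sempty (ssing MTop)
| dS_weak : forall G D G' D', derivS Th E G D -> ssub G G' -> ssub D D' -> derivS Th E G' D'
| dS_negL : forall G D a, derivS Th E G (sadd D a) -> derivS Th E (sadd G (MNeg a)) D
| dS_negR : forall G D a, derivS Th E (sadd G a) D -> derivS Th E G (sadd D (MNeg a))
| dS_andL : forall G D a b, derivS Th E (sadd (sadd G a) b) D -> derivS Th E (sadd G (MAnd a b)) D
| dS_andR : forall G D a b, derivS Th E G (sadd D a) -> derivS Th E G (sadd D b) ->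
    derivS Th E G (sadd D (MAnd a b))
| dS_orL : forall G D a b, derivS Th E (sadd G a) D -> derivS Th E (sadd G b) D ->
    derivS Th E (sadd G (MOr a b)) D
| dS_orR : forall G D a b, derivS Th E G (sadd (sadd D a) b) -> derivS Th E G (sadd D (MOr a b))
| dS_impL : forall G D a b, derivS Th E G (sadd D a) -> derivS Th E (sadd G b) D ->
    derivS Th E (sadd G (MImp a b)) D
| dS_impR : forall G D a b, derivS Th E (sadd G a) (sadd D b) -> derivS Th E G (sadd D (MImp a b))
| dS_boxR : forall G D p (S : list (causal_rule At)),
    in_theory Th S -> E (map snd S) p ->
    derivS Th E G (sadd D (emb (bigconj (map fst S)))) ->
    derivS Th E G (sadd D (MBox p))
| dS_boxL : forall G D p,
    (forall S : list (causal_rule At), in_theory Th S -> E (map snd S) p ->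
       derivS Th E (sunion G (slist (map (fun r => emb (fst r)) S))) D) ->
    derivS Th E (sadd G (MBox p)) D
| dS_cut : forall G D G' D' p,
    derivS Th E G (sadd D p) -> derivS Th E (sadd G' p) D' ->
    derivS Th E (sunion G G') (sunion D D').

Definition is_S_Theta {At : Type} (Th : causal_theory At)
  (E : list (form At) -> mform At -> Prop) : Prop :=
  forall (psis : list (form At)) (p : mform At),
    E psis p <-> derivS Th E (slist (map emb psis)) (ssing p).

Definition box_consistent {At : Type} Th E (Sg : mform At -> Prop) : Prop :=
  ~ derivS Th E Sg sempty.

Definition box_maximal {At : Type} Th E (Sg : mform At -> Prop) : Prop :=
  box_consistent Th E Sg /\
  forall Sg' : mform At -> Prop, ssub Sg Sg' -> box_consistent Th E Sg' -> ssub Sg' Sg.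

Inductive cderiv {At : Type} : (form At -> Prop) -> (form At -> Prop) -> Prop :=
| c_ax : forall p, cderiv (ssing p) (ssing p)
| c_bot : cderiv (ssing Bot) sempty
| c_top : cderiv sempty (ssing Top)
| c_weak : forall G D G' D', cderiv G D -> ssub G G' -> ssub D D' -> cderiv G' D'
| c_negL : forall G D a, cderiv G (sadd D a) -> cderiv (sadd G (Neg a)) D
| c_negR : forall G D a, cderiv (sadd G a) D -> cderiv G (sadd D (Neg a))
| c_andL : forall G D a b, cderiv (sadd (sadd G a) b) D -> cderiv (sadd G (And a b)) D
| c_andR : forall G D a b, cderiv G (sadd D a) -> cderiv G (sadd D b) -> cderiv G (sadd D (And a b))
| c_orL : forall G D a b, cderiv (sadd G a) D -> cderiv (sadd G b) D -> cderiv (sadd G (Or a b)) D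
| c_orR : forall G D a b, cderiv G (sadd (sadd D a) b) -> cderiv G (sadd D (Or a b))
| c_impL : forall G D a b, cderiv G (sadd D a) -> cderiv (sadd G b) D -> cderiv (sadd G (Imp a b)) D
| c_impR : forall G D a b, cderiv (sadd G a) (sadd D b) -> cderiv G (sadd D (Imp a b))
| c_cut : forall G D G' D' p, cderiv G (sadd D p) -> cderiv (sadd G' p) D' ->
    cderiv (sunion G G') (sunion D D').

Definition classically_consistent {At : Type} (X : form At -> Prop) : Prop :=
  ~ cderiv X sempty.

Definition is_model {At : Type} (X : form At -> Prop) : Prop :=
  classically_consistent X /\
  forall X' : form At -> Prop, ssub X X' -> classically_consistent X' -> ssub X' X.

Definition restrictL {At : Type} (Sg : mform At -> Prop) : form At -> Prop :=
  fun f => Sg (emb f).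

(* Main.v *)
Require Import Defs.
From Stdlib Require Import List Classical.
Import ListNotations.
Set Implicit Arguments. Unset Strict Implicit.

Ltac sets := unfold ssub, sadd, sunion, ssing, sempty, slist in *; intros;
  repeat match goal with H : exists _, _ |- _ => destruct H end;
  firstorder (subst; auto).

Record PC (F : Type) := mkPC {
  der : (F -> Prop) -> (F -> Prop) -> Prop;
  fbot : F; ftop : F; fneg : F -> F; fand : F -> F -> F; forr : F -> F -> F; fimp : F -> F -> F;
  r_ax : forall p, der (ssing p) (ssing p);
  r_bot : der (ssing fbot) sempty;
  r_top : der sempty (ssing ftop);
  r_weak : forall G D G' D', der G D -> ssub G G' -> ssub D D' -> der G' D';
  r_negL : forall G D a, der G (sadd D a) -> der (sadd G (fneg a)) D;
  r_negR : forall G D a, der (sadd G a) D -> der G (sadd D (fneg a));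
  r_andL : forall G D a b, der (sadd (sadd G a) b) D -> der (sadd G (fand a b)) D;
  r_andR : forall G D a b, der G (sadd D a) -> der G (sadd D b) -> der G (sadd D (fand a b));
  r_orL : forall G D a b, der (sadd G a) D -> der (sadd G b) D -> der (sadd G (forr a b)) D;
  r_orR : forall G D a b, der G (sadd (sadd D a) b) -> der G (sadd D (forr a b));
  r_impL : forall G D a b, der G (sadd D a) -> der (sadd G b) D -> der (sadd G (fimp a b)) D;
  r_impR : forall G D a b, der (sadd G a) (sadd D b) -> der G (sadd D (fimp a b));
  r_cut : forall G D G' D' p, der G (sadd D p) -> der (sadd G' p) D' -> der (sunion G G') (sunion D D')
}.

Definition maxc F (C : PC F) (X : F -> Prop) : Prop :=
  ~ der C X sempty /\ (forall X', ssub X X' -> ~ der C X' sempty -> ssub X' X).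

Lemma g_incons F (C : PC F) X G : maxc C X -> der C G sempty -> ssub G X -> False.
Proof. intros [H1 _] D S. apply H1. eapply r_weak; eauto. sets. Qed.

Lemma g_cl F (C : PC F) X G f : maxc C X -> der C G (ssing f) -> ssub G X -> X f.
Proof.
  intros [H1 H2] D S.
  assert (D1 : der C X (sadd sempty f)) by (eapply r_weak; eauto; sets).
  assert (Hc : ~ der C (sadd X f) sempty).
  { intro D2. apply H1. eapply r_weak. eapply r_cut; [exact D1|exact D2]. sets. sets. }
  apply (H2 _ (fun y Hy => or_introl Hy) Hc). sets.
Qed.

Lemma g_notin F (C : PC F) X f : maxc C X -> ~ X f -> der C (sadd X f) sempty.
Proof.
  intros [H1 H2] N. apply NNPP. intro Hc. apply N.
  apply (H2 _ (fun y Hy => or_introl Hy) Hc). sets.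
Qed.

Lemma g_bot F (C : PC F) X : maxc C X -> ~ X (fbot C).
Proof. intros H B. eapply g_incons; [exact H| apply r_bot|]. sets. Qed.

Lemma g_top F (C : PC F) X : maxc C X -> X (ftop C).
Proof. intros H. eapply g_cl; [exact H|apply r_top|]. sets. Qed.

Lemma g_neg F (C : PC F) X a : maxc C X -> (X (fneg C a) <-> ~ X a).
Proof.
  intros H; split.
  - intros N A. apply (@g_incons _ C X (sadd (ssing a) (fneg C a))); [exact H| |].
    + apply r_negL. eapply r_weak; [apply (r_ax C a)| sets | sets].
    + sets.
  - intros N. apply (@g_cl _ C X X); [exact H| |].
    + eapply r_weak; [apply r_negR; apply (g_notin H N)| sets | sets].
    + sets.
Qed.

Lemma g_and F (C : PC F) X a b : maxc C X -> (X (fand C a b) <-> X a /\ X b).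
Proof.
  intros H; split.
  - intros A; split.
    + apply (@g_cl _ C X (sadd sempty (fand C a b))); [exact H| |].
      * apply r_andL; eapply r_weak; [apply (r_ax C a)|sets|sets].
      * sets.
    + apply (@g_cl _ C X (sadd sempty (fand C a b))); [exact H| |].
      * apply r_andL; eapply r_weak; [apply (r_ax C b)|sets|sets].
      * sets.
  - intros [A B]. apply (@g_cl _ C X (sunion (ssing a) (ssing b))); [exact H| |].
    + eapply r_weak; [apply (@r_andR _ C (sunion (ssing a) (ssing b)) sempty);
        [apply (r_weak (r_ax C a)) | apply (r_weak (r_ax C b))]; sets | sets | sets].
    + sets.
Qed.

Lemma g_or F (C : PC F) X a b : maxc C X -> (X (forr C a b) <-> X a \/ X b).
Proof.
  intros H; split.
  - intros A. apply NNPP; intro N.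
    assert (Na : ~ X a) by tauto. assert (Nb : ~ X b) by tauto.
    apply (@g_incons _ C X (sadd X (forr C a b))); [exact H| apply r_orL; [apply (g_notin H Na)|apply (g_notin H Nb)] |].
    sets.
  - intros [A|A].
    + apply (@g_cl _ C X (ssing a)); [exact H| |].
      * eapply r_weak; [apply (@r_orR _ C (ssing a) sempty a b); apply (r_weak (r_ax C a)); sets|sets|sets].
      * sets.
    + apply (@g_cl _ C X (ssing b)); [exact H| |].
      * eapply r_weak; [apply (@r_orR _ C (ssing b) sempty a b); apply (r_weak (r_ax C b)); sets|sets|sets].
      * sets.
Qed.

Lemma g_imp F (C : PC F) X a b : maxc C X -> (X (fimp C a b) <-> (X a -> X b)).
Proof.
  intros H; split.
  - intros I A. apply (@g_cl _ C X (sadd (ssing a) (fimp C a b))); [exact H| |].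
    + apply (@r_impL _ C (ssing a) (ssing b) a b); [apply (r_weak (r_ax C a))|apply (r_weak (r_ax C b))]; sets.
    + sets.
  - intros I. destruct (classic (X a)) as [A|A].
    + apply (@g_cl _ C X (ssing b)); [exact H| |].
      * eapply r_weak; [apply (@r_impR _ C (ssing b) sempty a b); apply (r_weak (r_ax C b)); sets|sets|sets].
      * specialize (I A). sets.
    + apply (@g_cl _ C X X); [exact H| |].
      * eapply r_weak; [apply (@r_impR _ C X sempty a b); eapply r_weak; [apply (g_notin H A)|sets|sets]|sets|sets].
      * sets.
Qed.

Definition PCc (At : Type) : PC (form At) :=
  @mkPC _ (@cderiv At) Bot Top (@Neg At) (@And At) (@Or At) (@Imp At)
    (@c_ax At) (@c_bot At) (@c_top At) (@c_weak At) (@c_negL At) (@c_negR At)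
    (@c_andL At) (@c_andR At) (@c_orL At) (@c_orR At) (@c_impL At) (@c_impR At) (@c_cut At).

Definition PCm (At : Type) Th E : PC (mform At) :=
  @mkPC _ (@derivS At Th E) MBot MTop (@MNeg At) (@MAnd At) (@MOr At) (@MImp At)
    (@dS_ax At Th E) (@dS_bot At Th E) (@dS_top At Th E) (@dS_weak At Th E)
    (@dS_negL At Th E) (@dS_negR At Th E)
    (@dS_andL At Th E) (@dS_andR At Th E) (@dS_orL At Th E) (@dS_orR At Th E)
    (@dS_impL At Th E) (@dS_impR At Th E) (@dS_cut At Th E).

Fixpoint T {At : Type} (Th : causal_theory At) (E : list (form At) -> mform At -> Prop)
  (m : form At -> Prop) (x : mform At) : Prop :=
  match x with
  | MVar a => m (Var a)
  | MBot => False
  | MTop => True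
  | MNeg a => ~ T Th E m a
  | MAnd a b => T Th E m a /\ T Th E m b
  | MOr a b => T Th E m a \/ T Th E m b
  | MImp a b => T Th E m a -> T Th E m b
  | MBox p => exists S, in_theory Th S /\ E (map snd S) p /\ m (bigconj (map fst S))
  end.

Lemma model_maxc At (m : form At -> Prop) : is_model m -> maxc (PCc At) m.
Proof. intro H; exact H. Qed.

Lemma T_emb At Th E (m : form At -> Prop) : is_model m -> forall f, T Th E m (emb f) <-> m f.
Proof.
  intro Hm0; pose proof (model_maxc Hm0) as Hm.
  induction f; simpl.
  - tauto.
  - split; [contradiction| intro B; exact (g_bot Hm B)].
  - split; [intros _; exact (g_top Hm)| tauto].
  - rewrite IHf. symmetry. exact (g_neg f Hm).
  - rewrite IHf1, IHf2. symmetry. exact (g_and f1 f2 Hm).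
  - rewrite IHf1, IHf2. symmetry. exact (g_or f1 f2 Hm).
  - rewrite IHf1, IHf2. symmetry. exact (g_imp f1 f2 Hm).
Qed.

Lemma bigconj_in At (m : form At -> Prop) : is_model m ->
  forall l f, m (bigconj l) -> In f l -> m f.
Proof.
  intros Hm0 l; pose proof (model_maxc Hm0) as Hm.
  induction l as [|x xs IH]; intros f B I; simpl in I.
  - contradiction.
  - destruct xs as [|y ys].
    + destruct I as [<-|[]]; exact B.
    + change (m (And x (bigconj (y :: ys)))) in B.
      apply (g_and x (bigconj (y::ys)) Hm) in B. destruct B as [B1 B2].
      destruct I as [<-|I]; auto.
Qed.

Lemma dsound At Th E (m : form At -> Prop) : is_model m ->
  forall G D, derivS Th E G D -> (forall g, G g -> T Th E m g) -> exists d, D d /\ T Th E m d.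
Proof.
  intros Hm G D Hd; induction Hd; intros HG;
  unfold ssub, sadd, sunion, ssing, sempty, slist in *.
  - exists p; split; auto.
  - destruct (HG MBot eq_refl).
  - exists MTop; simpl; auto.
  - destruct IHHd as [d [Dd Td]]. { intros g Gg; apply HG; auto. }
    exists d; auto.
  - destruct IHHd as [d [[Dd|Dd] Td]]. { intros g Gg; apply HG; auto. }
    + exists d; auto.
    + subst d. exfalso. exact (HG (MNeg a) (or_intror eq_refl) Td).
  - destruct (classic (T Th E m a)) as [A|A].
    + destruct IHHd as [d [Dd Td]]. { intros g [Gg| ->]; auto. }
      exists d; auto.
    + exists (MNeg a); simpl; auto.
  - destruct IHHd as [d [Dd Td]].
    { pose proof (HG (MAnd a b) (or_intror eq_refl)) as [A B].
      intros g [[Gg| ->]| ->]; auto. }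
    exists d; auto.
  - destruct IHHd1 as [d [[Dd| ->] Td]]; auto. { exists d; auto. }
    destruct IHHd2 as [d [[Dd| ->] Td']]; auto. { exists d; auto. }
    exists (MAnd a b); simpl; auto.
  - destruct (HG (MOr a b) (or_intror eq_refl)) as [A|B].
    + destruct IHHd1 as [d [Dd Td]]. { intros g [Gg| ->]; auto. } exists d; auto.
    + destruct IHHd2 as [d [Dd Td]]. { intros g [Gg| ->]; auto. } exists d; auto.
  - destruct IHHd as [d [[[Dd| ->]| ->] Td]]; auto.
    + exists d; auto.
    + exists (MOr a b); simpl; auto.
    + exists (MOr a b); simpl; auto.
  - destruct IHHd1 as [d [[Dd| ->] Td]]; auto. { exists d; auto. }
    pose proof (HG (MImp a b) (or_intror eq_refl) Td) as B.
    destruct IHHd2 as [d [Dd Td']]. { intros g [Gg| ->]; auto. } exists d; auto.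
  - destruct (classic (T Th E m a)) as [A|A].
    + destruct IHHd as [d [[Dd| ->] Td]]. { intros g [Gg| ->]; auto. }
      * exists d; auto.
      * exists (MImp a b); simpl; auto.
    + exists (MImp a b); simpl; split; auto. intro; contradiction.
  - destruct IHHd as [d [[Dd| ->] Td]]; auto. { exists d; auto. }
    rewrite T_emb in Td by exact Hm.
    exists (MBox p); split; auto. simpl. exists S; auto.
  - destruct (HG (MBox p) (or_intror eq_refl)) as [S [HS [HE Hb]]].
    apply (H0 S HS HE).
    intros g [Gg|Ig]; auto.
    apply in_map_iff in Ig. destruct Ig as [r [<- Ir]].
    apply T_emb; auto. apply (bigconj_in Hm Hb). apply in_map; auto.
  - destruct IHHd1 as [d [[Dd| ->] Td]]; auto. { exists d; auto. }
    destruct IHHd2 as [d [Dd Td']]. { intros g [Gg| ->]; auto. } exists d; auto.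
Qed.

Lemma maxT At Th E (m : form At -> Prop) : is_model m -> box_maximal Th E (T Th E m).
Proof.
  intros Hm. unfold box_maximal, box_consistent. split.
  - intro D. destruct (dsound Hm D (fun g Hg => Hg)) as [d [[] _]].
  - intros Sg' Sub Cons x Hx. apply NNPP; intro N. apply Cons.
    eapply dS_weak.
    + apply (@dS_negL _ Th E (ssing x) sempty x). eapply dS_weak; [apply dS_ax| |]; sets.
    + assert (Sg' (MNeg x)) by (apply Sub; exact N). sets.
    + sets.
Qed.

Lemma bigconj_der At Th E : forall l : list (form At),
  derivS Th E (slist (map emb l)) (ssing (emb (bigconj l))).
Proof.
  induction l as [|x xs IH].
  - simpl. eapply dS_weak; [apply dS_top|sets|sets].
  - destruct xs as [|y ys].
    + simpl. eapply dS_weak; [apply dS_ax|sets|sets].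
    + change (emb (bigconj (x :: y :: ys))) with (MAnd (emb x) (emb (bigconj (y :: ys)))).
      eapply dS_weak; [apply (@dS_andR _ Th E (slist (map emb (x :: y :: ys))) sempty)| |].
      * eapply dS_weak; [apply dS_ax|sets|sets].
      * eapply dS_weak; [apply IH| |sets]. simpl. sets.
      * sets.
      * sets.
Qed.

Lemma Sigma_T At Th E (Sg : mform At -> Prop) : box_maximal Th E Sg ->
  forall x, Sg x <-> T Th E (restrictL Sg) x.
Proof.
  intros H0. assert (Hs : maxc (PCm Th E) Sg) by exact H0.
  induction x; simpl.
  - unfold restrictL; simpl; tauto.
  - split; [intro B; exact (g_bot Hs B)| tauto].
  - split; [tauto| intros _; exact (g_top Hs)].
  - rewrite <- IHx. exact (g_neg x Hs).
  - rewrite <- IHx1, <- IHx2. exact (g_and x1 x2 Hs).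
  - rewrite <- IHx1, <- IHx2. exact (g_or x1 x2 Hs).
  - rewrite <- IHx1, <- IHx2. exact (g_imp x1 x2 Hs).
  - split.
    + intro B. apply NNPP; intro N.
      apply (@g_incons _ (PCm Th E) Sg (sadd Sg (MBox x)) Hs).
      * simpl. apply dS_boxL. intros S HS HE'.
        assert (N' : ~ Sg (emb (bigconj (map fst S)))).
        { intro Hb. apply N. exists S. unfold restrictL. auto. }
        pose proof (g_notin Hs N') as D2. simpl in D2.
        eapply dS_weak; [eapply (@dS_cut _ Th E (slist (map (fun r => emb (fst r)) S)) sempty); [|exact D2]| |].
        -- eapply dS_weak; [apply (bigconj_der Th E (map fst S))| |sets].
           rewrite map_map. sets.
        -- sets.
        -- sets.
      * sets.
    + intros [S [HS [HE' Hb]]]. apply (@g_cl _ (PCm Th E) Sg Sg (MBox x) Hs); [|sets].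
      simpl. eapply dS_weak; [apply (@dS_boxR _ Th E Sg sempty x S HS HE')| sets | sets].
      eapply dS_weak; [apply dS_ax| |sets]. unfold restrictL in Hb. sets.
Qed.

Lemma T_ext At Th E (m1 m2 : form At -> Prop) : (forall f, m1 f <-> m2 f) ->
  forall x, T Th E m1 x <-> T Th E m2 x.
Proof.
  intros H; induction x; simpl; try tauto.
  - apply H.
  - split; intros [S [A [B C]]]; exists S; repeat split; auto; apply H; auto.
Qed.

Lemma csound At Th E (m : form At -> Prop) :
  forall G D, cderiv G D -> (forall g, G g -> T Th E m (emb g)) -> exists d, D d /\ T Th E m (emb d).
Proof.
  intros G D Hd; induction Hd; intros HG;
  unfold ssub, sadd, sunion, ssing, sempty, slist in *.
  - exists p; split; auto.
  - destruct (HG Bot eq_refl).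
  - exists Top; simpl; auto.
  - destruct IHHd as [d [Dd Td]]. { intros g Gg; apply HG; auto. }
    exists d; auto.
  - destruct IHHd as [d [[Dd|Dd] Td]]. { intros g Gg; apply HG; auto. }
    + exists d; auto.
    + subst d. exfalso. exact (HG (Neg a) (or_intror eq_refl) Td).
  - destruct (classic (T Th E m (emb a))) as [A|A].
    + destruct IHHd as [d [Dd Td]]. { intros g [Gg| ->]; auto. }
      exists d; auto.
    + exists (Neg a); simpl; auto.
  - destruct IHHd as [d [Dd Td]].
    { pose proof (HG (And a b) (or_intror eq_refl)) as [A B].
      intros g [[Gg| ->]| ->]; auto. }
    exists d; auto.
  - destruct IHHd1 as [d [[Dd| ->] Td]]; auto. { exists d; auto. }
    destruct IHHd2 as [d [[Dd| ->] Td']]; auto. { exists d; auto. }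
    exists (And a b); simpl; auto.
  - destruct (HG (Or a b) (or_intror eq_refl)) as [A|B].
    + destruct IHHd1 as [d [Dd Td]]. { intros g [Gg| ->]; auto. } exists d; auto.
    + destruct IHHd2 as [d [Dd Td]]. { intros g [Gg| ->]; auto. } exists d; auto.
  - destruct IHHd as [d [[[Dd| ->]| ->] Td]]; auto.
    + exists d; auto.
    + exists (Or a b); simpl; auto.
    + exists (Or a b); simpl; auto.
  - destruct IHHd1 as [d [[Dd| ->] Td]]; auto. { exists d; auto. }
    pose proof (HG (Imp a b) (or_intror eq_refl) Td) as B.
    destruct IHHd2 as [d [Dd Td']]. { intros g [Gg| ->]; auto. } exists d; auto.
  - destruct (classic (T Th E m (emb a))) as [A|A].
    + destruct IHHd as [d [[Dd| ->] Td]]. { intros g [Gg| ->]; auto. }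
      * exists d; auto.
      * exists (Imp a b); simpl; auto.
    + exists (Imp a b); simpl; split; auto. intro; contradiction.
  - destruct IHHd1 as [d [[Dd| ->] Td]]; auto. { exists d; auto. }
    destruct IHHd2 as [d [Dd Td']]. { intros g [Gg| ->]; auto. } exists d; auto.
Qed.

Lemma part1 At Th E (Sg : mform At -> Prop) : box_maximal Th E Sg -> is_model (restrictL Sg).
Proof.
  intros H. pose proof (Sigma_T H) as Hx.
  split.
  - intro D. destruct (csound (Th:=Th) (E:=E) (m:=restrictL Sg) D (fun g Hg => proj1 (Hx (emb g)) Hg)) as [d [[] _]].
  - intros X' Sub Cons f Hf. apply NNPP; intro N. apply Cons.
    assert (Hn : restrictL Sg (Neg f)).
    { unfold restrictL. apply Hx. simpl. intro Tf. apply N. apply Hx. exact Tf. }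
    eapply c_weak.
    + apply (@c_negL _ (ssing f) sempty f). eapply c_weak; [apply c_ax| |]; sets.
    + assert (X' (Neg f)) by (apply Sub; exact Hn). sets.
    + sets.
Qed.

Theorem mainTheorem14 (At : Type) (Th : causal_theory At)
  (E : list (form At) -> mform At -> Prop) (HE : is_S_Theta Th E) :
  (forall Sg : mform At -> Prop, box_maximal Th E Sg -> is_model (restrictL Sg)) /\
  (forall Sg1 Sg2 : mform At -> Prop, box_maximal Th E Sg1 -> box_maximal Th E Sg2 ->
     (forall f : form At, restrictL Sg1 f <-> restrictL Sg2 f) ->
     forall x : mform At, Sg1 x <-> Sg2 x) /\
  (forall m : form At -> Prop, is_model m ->
     exists Sg : mform At -> Prop, box_maximal Th E Sg /\
       forall f : form At, restrictL Sg f <-> m f).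
Proof.
  split; [|split].
  - intros Sg H; exact (part1 H).
  - intros Sg1 Sg2 H1 H2 Hr x.
    rewrite (Sigma_T H1 x), (Sigma_T H2 x). apply T_ext. exact Hr.
  - intros m Hm. exists (T Th E m). split.
    + exact (@maxT At Th E m Hm).
    + intro f. unfold restrictL. exact (@T_emb At Th E m Hm f).
Qed.
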